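(* Let $K$ be the $2$-uniform tiling of the plane whose vertex types are $[3^6]$ and $[3^2,6^2]$. If $X$ is a map on the torus that is a quotient $X=K/\Gamma$ of $K$, then the vertices of $X$ form at most $4$ orbits under ${\rm Aut}(X)$.
   Context: A map is a polyhedral map: a cellular embedding of a connected graph in a closed surface such that the intersection of any two distinct faces is empty, a single vertex, or a single edge. For a vertex $u$, the faces containing $u$ form a cyclic sequence (the face-cycle at $u$); if this cyclic sequence consists of consecutive blocks of $n_1$ $p_1$-gons, then $n_2$ $p_2$-gons, ..., then $n_k$ $p_k$-gons, with cyclically consecutive $p_i$ distinct, then $u$ is said to have type $[p_1^{n_1},\dots,p_k^{n_k}]$ (defined up to cyclic shift and reversal). A $2$-uniform tiling is an edge-to-edge tiling of the Euclidean plane $\mathbb{R}^2$ by regular polygons whose symmetry group has exactly two orbits on the set of vertices; viewed as a map on the plane, its vertices have (at most) two types, listed as $[W;Z]$. (Up to isomorphism there are exactly $20$ such tilings; there is exactly one with the vertex types named in the claim.) For a map $K$ on the plane, a quotient of $K$ on the torus is a map $X$ on the torus together with a polyhedral covering map $\eta:K\to X$ with $X=K/\Gamma$, where $\Gamma\le {\rm Aut}(K)$ is a subgroup acting without fixed vertices, edges or faces and $K/\Gamma$ is homeomorphic to the torus. ${\rm Aut}(X)$ denotes the automorphism group of the map $X$, acting on its vertex set $V(X)$. *)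

(* Defs.v *)
From Stdlib Require Import ZArith List.
Import ListNotations.
Open Scope Z_scope.

(** Points of the triangular lattice: (a,b) stands for a*e1 + b*e2 with
    e1 = (1,0), e2 = (1/2, sqrt 3 / 2).  The six neighbours of p are
    p +/- e1, p +/- e2, p +/- (e1 - e2). *)
Definition pt := (Z * Z)%type.
Definition padd (p q : pt) : pt := (fst p + fst q, snd p + snd q).

(** The 2-uniform tiling K = [3^6; 3^2.6^2]: the triangular lattice with the
    points congruent to (1,1) or (2,2) mod 3 deleted; each deleted point
    leaves a hexagonal face.  Points = 0 mod 3 have type [3^6], the others
    type [3^2,6^2]. *)
Definition removed (p : pt) : Prop :=
  (fst p mod 3 = 1 /\ snd p mod 3 = 1) \/ (fst p mod 3 = 2 /\ snd p mod 3 = 2).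
Definition Kvert (p : pt) : Prop := ~ removed p.

Definition up_tri (p : pt) : list pt := [p; padd p (1,0); padd p (0,1)].
Definition down_tri (p : pt) : list pt :=
  [padd p (1,0); padd p (1,1); padd p (0,1)].
Definition hexagon (c : pt) : list pt :=
  [padd c (1,0); padd c (0,1); padd c (-1,1); padd c (-1,0);
   padd c (0,-1); padd c (1,-1)].
Definition Kface (F : list pt) : Prop :=
  exists p, ((F = up_tri p \/ F = down_tri p) /\ Forall Kvert F)
            \/ (F = hexagon p /\ removed p).

Definition KTransAut (w : pt) : Prop :=
  (forall p, Kvert p <-> Kvert (padd p w)) /\
  (forall F, Kface F <-> Kface (map (fun p => padd p w) F)).

(** The group Gamma generated by the translations by w1, w2; congruence of
    points modulo Gamma (vertices of X = K/Gamma are the classes). *)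
Definition lat (w1 w2 : pt) (m n : Z) : pt :=
  (m * fst w1 + n * fst w2, m * snd w1 + n * snd w2).
Definition cong (w1 w2 : pt) (p q : pt) : Prop :=
  exists m n, q = padd p (lat w1 w2 m n).

Definition Xsame (w1 w2 : pt) (F1 F2 : list pt) : Prop :=
  exists m n, F2 = map (fun p => padd p (lat w1 w2 m n)) F1.

Definition fedge (F : list pt) (i : nat) : pt * pt :=
  (nth i F (0,0), nth (Nat.modulo (S i) (length F)) F (0,0)).

Definition Xsame_edge (w1 w2 : pt) (e1 e2 : pt * pt) : Prop :=
  exists m n, (e2 = (padd (fst e1) (lat w1 w2 m n), padd (snd e1) (lat w1 w2 m n)))
           \/ (e2 = (padd (snd e1) (lat w1 w2 m n), padd (fst e1) (lat w1 w2 m n))).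

(** x (a vertex of K, standing for its class) is a common vertex of the
    images in X of the faces F1, F2. *)
Definition Xcommon (w1 w2 : pt) (F1 F2 : list pt) (x : pt) : Prop :=
  (exists p, In p F1 /\ cong w1 w2 p x) /\ (exists q, In q F2 /\ cong w1 w2 q x).

Definition Xpolyhedral (w1 w2 : pt) : Prop :=
  (forall F, Kface F -> forall i j, (i < j < length F)%nat ->
     ~ cong w1 w2 (nth i F (0,0)) (nth j F (0,0))) /\
  (forall F1 F2, Kface F1 -> Kface F2 -> ~ Xsame w1 w2 F1 F2 ->
     (forall x, ~ Xcommon w1 w2 F1 F2 x)
     \/ (exists v, forall x, Xcommon w1 w2 F1 F2 x <-> cong w1 w2 v x)
     \/ (exists i j, (i < length F1)%nat /\ (j < length F2)%nat /\
           Xsame_edge w1 w2 (fedge F1 i) (fedge F2 j) /\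
           forall x, Xcommon w1 w2 F1 F2 x <->
             (cong w1 w2 (fst (fedge F1 i)) x \/ cong w1 w2 (snd (fedge F1 i)) x))).

(** f (on representatives) induces a map V(X) -> V(X) sending faces of X to
    faces of X. *)
Definition Xhom (w1 w2 : pt) (f : pt -> pt) : Prop :=
  (forall p, Kvert p -> Kvert (f p)) /\
  (forall p q, Kvert p -> Kvert q -> cong w1 w2 p q -> cong w1 w2 (f p) (f q)) /\
  (forall F, Kface F -> exists F', Kface F' /\
     forall x, (exists p, In p F /\ cong w1 w2 (f p) x) <->
               (exists q, In q F' /\ cong w1 w2 q x)).

Definition Xaut (w1 w2 : pt) (f : pt -> pt) : Prop :=
  Xhom w1 w2 f /\
  exists g, Xhom w1 w2 g /\
    forall p, Kvert p -> cong w1 w2 (g (f p)) p /\ cong w1 w2 (f (g p)) p.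

(* Main.v *)
Require Import Defs.
From Stdlib Require Import ZArith List Lia Setoid.
Import ListNotations.
Open Scope Z_scope.

Ltac zl := Z.to_euclidean_division_equations; lia.

Definition aff (s t1 t2 : Z) (x : pt) : pt := (s * fst x + t1, s * snd x + t2).

Lemma aff_removed s t1 t2 : (s = 1 \/ s = -1) -> t1 mod 3 = 0 -> t2 mod 3 = 0 ->
  forall p, removed p <-> removed (aff s t1 t2 p).
Proof. intros Hs H1 H2 [x y]; unfold removed, aff; simpl. destruct Hs; subst; split; intro HH; zl. Qed.

Lemma aff_Kvert s t1 t2 : (s = 1 \/ s = -1) -> t1 mod 3 = 0 -> t2 mod 3 = 0 ->
  forall p, Kvert p -> Kvert (aff s t1 t2 p).
Proof. intros Hs H1 H2 p Hp Hr. apply Hp. apply (aff_removed s t1 t2 Hs H1 H2 p). exact Hr. Qed.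

Lemma aff_cong w1 w2 s t1 t2 p q : cong w1 w2 p q -> cong w1 w2 (aff s t1 t2 p) (aff s t1 t2 q).
Proof. intros [m [n ->]]. exists (s*m), (s*n). unfold aff, padd, lat; simpl. f_equal; ring. Qed.

Lemma forall_transfer (f : pt -> pt) F F' :
  (forall p, Kvert p -> Kvert (f p)) ->
  (forall y, In y (map f F) <-> In y F') -> Forall Kvert F -> Forall Kvert F'.
Proof.
  intros Hf Hs HF. rewrite Forall_forall in *. intros y Hy.
  apply Hs in Hy. apply in_map_iff in Hy. destruct Hy as [x [<- Hx]]. auto.
Qed.

Lemma peq (a b c d : Z) : ((a,b) = (c,d) :> pt) <-> a = c /\ b = d.
Proof. split; [intros H; inversion H; auto | intros [-> ->]; reflexivity]. Qed.

Ltac setq := let y1 := fresh in let y2 := fresh in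
  intros [y1 y2]; unfold up_tri, down_tri, hexagon, aff, padd; cbn [map fst snd In]; rewrite ?peq; split; intro HH; lia.

Lemma aff_face s t1 t2 : (s = 1 \/ s = -1) -> t1 mod 3 = 0 -> t2 mod 3 = 0 ->
  forall F, Kface F -> exists F', Kface F' /\
    forall y, In y (map (aff s t1 t2) F) <-> In y F'.
Proof.
  intros Hs H1 H2 F HF0.
  assert (HK := aff_Kvert s t1 t2 Hs H1 H2).
  assert (HR := aff_removed s t1 t2 Hs H1 H2).
  destruct HF0 as [[p1 p2] [[[E | E] HF] | [E Hr]]]; subst F.
  - destruct Hs as [-> | ->].
    + assert (Hq : forall y, In y (map (aff 1 t1 t2) (up_tri (p1,p2))) <->
                   In y (up_tri (p1+t1, p2+t2))) by setq.
      exists (up_tri (p1+t1, p2+t2)). split; [|exact Hq].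
      exists (p1+t1, p2+t2). left. split; [left; reflexivity|].
      exact (forall_transfer _ _ _ HK Hq HF).
    + assert (Hq : forall y, In y (map (aff (-1) t1 t2) (up_tri (p1,p2))) <->
                   In y (down_tri (-p1+t1-1, -p2+t2-1))) by setq.
      exists (down_tri (-p1+t1-1, -p2+t2-1)). split; [|exact Hq].
      exists (-p1+t1-1, -p2+t2-1). left. split; [right; reflexivity|].
      exact (forall_transfer _ _ _ HK Hq HF).
  - destruct Hs as [-> | ->].
    + assert (Hq : forall y, In y (map (aff 1 t1 t2) (down_tri (p1,p2))) <->
                   In y (down_tri (p1+t1, p2+t2))) by setq.
      exists (down_tri (p1+t1, p2+t2)). split; [|exact Hq].
      exists (p1+t1, p2+t2). left. split; [right; reflexivity|].
      exact (forall_transfer _ _ _ HK Hq HF).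
    + assert (Hq : forall y, In y (map (aff (-1) t1 t2) (down_tri (p1,p2))) <->
                   In y (up_tri (-p1+t1-1, -p2+t2-1))) by setq.
      exists (up_tri (-p1+t1-1, -p2+t2-1)). split; [|exact Hq].
      exists (-p1+t1-1, -p2+t2-1). left. split; [left; reflexivity|].
      exact (forall_transfer _ _ _ HK Hq HF).
  - apply HR in Hr. unfold aff in Hr; simpl in Hr.
    destruct Hs as [-> | ->].
    + exists (hexagon (1*p1+t1, 1*p2+t2)). split; [|setq].
      exists (1*p1+t1, 1*p2+t2). right. split; [reflexivity|exact Hr].
    + exists (hexagon (-1*p1+t1, -1*p2+t2)). split; [|setq].
      exists (-1*p1+t1, -1*p2+t2). right. split; [reflexivity|exact Hr].
Qed.

Lemma aff_Xhom w1 w2 s t1 t2 : (s = 1 \/ s = -1) -> t1 mod 3 = 0 -> t2 mod 3 = 0 ->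
  Xhom w1 w2 (aff s t1 t2).
Proof.
  intros Hs H1 H2. split; [apply aff_Kvert; auto|]. split.
  - intros p q _ _ H. apply aff_cong; exact H.
  - intros F HF. destruct (aff_face s t1 t2 Hs H1 H2 F HF) as [F' [HF' Hq]].
    exists F'. split; [exact HF'|]. intros x. split.
    + intros [p [Hp Hc]]. exists (aff s t1 t2 p). split; [|exact Hc].
      apply Hq. apply in_map. exact Hp.
    + intros [q [Hqin Hc]]. apply Hq in Hqin. apply in_map_iff in Hqin.
      destruct Hqin as [p [<- Hp]]. exists p. auto.
Qed.

Lemma aff_Xaut w1 w2 s t1 t2 : (s = 1 \/ s = -1) -> t1 mod 3 = 0 -> t2 mod 3 = 0 ->
  Xaut w1 w2 (aff s t1 t2).
Proof.
  intros Hs H1 H2. split; [apply aff_Xhom; auto|].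
  exists (aff s (-(s*t1)) (-(s*t2))). split.
  - apply aff_Xhom; auto; destruct Hs; subst; zl.
  - intros [p1 p2] _. split; exists 0, 0; unfold aff, padd, lat; simpl;
      apply pair_equal_spec; destruct Hs; subst; lia.
Qed.

Definition rs : list pt := [(0,0); (1,0); (0,1); (1,2)].

Lemma pick w1 w2 p1 p2 s r1 r2 : (s = 1 \/ s = -1) ->
  (r1 - s*p1) mod 3 = 0 -> (r2 - s*p2) mod 3 = 0 -> In (r1,r2) rs ->
  exists f, Xaut w1 w2 f /\ exists r, In r rs /\ cong w1 w2 (f (p1,p2)) r.
Proof.
  intros Hs H1 H2 Hin. exists (aff s (r1 - s*p1) (r2 - s*p2)). split.
  - apply aff_Xaut; auto.
  - exists (r1,r2). split; [exact Hin|]. exists 0, 0.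
    unfold aff, padd, lat; simpl. apply pair_equal_spec; zl.
Qed.

Theorem theorem1 (w1 w2 : pt)
  (Hdet : fst w1 * snd w2 - snd w1 * fst w2 <> 0)
  (H1 : KTransAut w1) (H2 : KTransAut w2)
  (Hpoly : Xpolyhedral w1 w2) :
  exists rs : list pt, (length rs <= 4)%nat /\ Forall Kvert rs /\
    forall p, Kvert p ->
      exists f, Xaut w1 w2 f /\ exists r, In r rs /\ cong w1 w2 (f p) r.
Proof.
  exists rs. split; [simpl; lia|]. split.
  - unfold rs; repeat (apply Forall_cons; [unfold Kvert, removed; simpl; zl|]); apply Forall_nil.
  - intros [p1 p2] Hp. unfold Kvert, removed in Hp; simpl in Hp.
    assert (C : (p1 mod 3 = 0 /\ p2 mod 3 = 0) \/ (p1 mod 3 = 1 /\ p2 mod 3 = 0)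
      \/ (p1 mod 3 = 2 /\ p2 mod 3 = 0) \/ (p1 mod 3 = 0 /\ p2 mod 3 = 1)
      \/ (p1 mod 3 = 0 /\ p2 mod 3 = 2) \/ (p1 mod 3 = 1 /\ p2 mod 3 = 2)
      \/ (p1 mod 3 = 2 /\ p2 mod 3 = 1)) by zl.
    destruct C as [C|[C|[C|[C|[C|[C|C]]]]]].
    + apply (pick _ _ _ _ 1 0 0); [lia | zl | zl | unfold rs; simpl; auto 10].
    + apply (pick _ _ _ _ 1 1 0); [lia | zl | zl | unfold rs; simpl; auto 10].
    + apply (pick _ _ _ _ (-1) 1 0); [lia | zl | zl | unfold rs; simpl; auto 10].
    + apply (pick _ _ _ _ 1 0 1); [lia | zl | zl | unfold rs; simpl; auto 10].
    + apply (pick _ _ _ _ (-1) 0 1); [lia | zl | zl | unfold rs; simpl; auto 10].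
    + apply (pick _ _ _ _ 1 1 2); [lia | zl | zl | unfold rs; simpl; auto 10].
    + apply (pick _ _ _ _ (-1) 1 2); [lia | zl | zl | unfold rs; simpl; auto 10].
Qed.
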